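(* For $n\ge 1$, the symmetric double star $D_n$ satisfies $\nu^*(D_n)=10n^2+10n+3$.
   Context: For a finite simple graph $G=(V,E)$ with $\ell=|V|+|E|$, a construction sequence (c-sequence) is a bijection $x:\{1,\dots,\ell\}\to V\sqcup E$ such that every edge $e=uw$ satisfies $x^{-1}(e)>\max\{x^{-1}(u),x^{-1}(w)\}$. The cost of $x$ is $\nu(x)=\sum_{e=uw\in E}\big(2x^{-1}(e)-x^{-1}(u)-x^{-1}(w)\big)$, and $\nu^*(G)$ is the maximum of $\nu(x)$ over all c-sequences for $G$. The symmetric double star $D_n$ is the graph formed from two disjoint copies of the star $K_{1,n}$ by adding an edge joining their two hubs. *)

(* Defs.v *)
From mathcomp Require Import all_boot.
Set Implicit Arguments. Unset Strict Implicit. Unset Printing Implicit Defensive.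

Section CSeq.
Variables (T : finType) (e : rel T).

Definition simple_graph : Prop := symmetric e /\ irreflexive e.

Definition is_edge (s : {set T}) : bool :=
  [exists u : T, exists w : T, e u w && (s == [set u; w])].

Definition edge_type := {s : {set T} | is_edge s}.

Definition elt := (T + edge_type)%type.

Definition ell : nat := #|{: elt}|.

(* A candidate sequence x : {1..ell} -> V ⊔ E, indexed by 'I_ell
   (position i : 'I_ell is the (i+1)-th entry). *)
Definition seqtype := {ffun 'I_ell -> elt}.

(* x^{-1}(a), 1-based. *)
Definition pos (x : seqtype) (a : elt) : nat :=
  (index a [seq x i | i <- enum 'I_ell]).+1.

Definition cseq (x : seqtype) : bool :=
  injectiveb x && (* injective from 'I_ell onto a type of size ell: a bijection *)
  [forall s : edge_type, forall u : T,
      (u \in val s) ==> (pos x (inl u) < pos x (inr s))].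

(* For an edge s = {u, w}, 2 x^{-1}(s) - x^{-1}(u) - x^{-1}(w)
   (nonnegative for c-sequences, so nat subtraction is exact there). *)
Definition cost (x : seqtype) : nat :=
  \sum_(s : edge_type)
     (2 * pos x (inr s) - \sum_(u in val s) pos x (inl u)).

Definition nu_star : nat := \max_(x : seqtype | cseq x) cost x.

End CSeq.

(* Symmetric double star D_n: vertices (b, None) are the two hubs (b : bool),
   vertices (b, Some i) are the n leaves attached to hub b. *)
Definition ds_vertex (n : nat) := (bool * option 'I_n)%type.

Definition double_star (n : nat) : rel (ds_vertex n) :=
  fun v w =>
    match v.2, w.2 with
    | None, None => v.1 != w.1
    | None, Some _ => v.1 == w.1
    | Some _, None => v.1 == w.1
    | Some _, Some _ => false
    end.
Arguments double_star : clear implicits.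

Lemma double_star_simple n : simple_graph (double_star n).
Proof.
split.
- by move=> [b [i|]] [c [j|]]; rewrite /double_star /= // eq_sym.
- by move=> [b [i|]]; rewrite /double_star /= ?eqxx.
Qed.

(* Main.v *)
Require Import Defs.
From mathcomp Require Import all_boot zify.
Set Implicit Arguments. Unset Strict Implicit. Unset Printing Implicit Defensive.

Lemma sum_full (I : finType) (s : seq I) (F : I -> nat) :
  uniq s -> (forall i, i \in s) -> \sum_i F i = \sum_(i <- s) F i.
Proof.
move=> Us Hs; rewrite [RHS]big_uniq //; apply: eq_bigl => i; by rewrite Hs.
Qed.

Lemma sum_sumT (T1 T2 : finType) (F : T1 + T2 -> nat) :
  \sum_a F a = \sum_t F (inl t) + \sum_t F (inr t).
Proof.
rewrite (@sum_full _ (map inl (index_enum T1) ++ map inr (index_enum T2))).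
  by rewrite big_cat !big_map.
  rewrite cat_uniq !map_inj_uniq ?index_enum_uniq //=; last by move=> ? ? [].
    rewrite andbT; apply/hasPn => a /mapP [t _ ->]; apply/mapP => [[u _]] //.
  by move=> ? ? [].
case=> t; rewrite mem_cat; apply/orP; [left|right]; apply: map_f; by rewrite mem_index_enum.
Qed.

Lemma sum_opt (T1 : finType) (F : option T1 -> nat) :
  \sum_a F a = F None + \sum_t F (Some t).
Proof.
rewrite (@sum_full _ (None :: map Some (index_enum T1))).
  by rewrite big_cons big_map.
  rewrite /= map_inj_uniq ?index_enum_uniq ?andbT; last by move=> ? ? [].
  by apply/mapP => [[u _]].
case=> [t|]; rewrite inE //; apply/orP; right; apply: map_f; by rewrite mem_index_enum.
Qed.

Lemma path_nth_ge (t : seq nat) a : path ltn a t -> forall i, i < (size t).+1 -> a + i <= nth 0 (a :: t) i.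
Proof.
elim: t a => [|b t IH] a /=; first by move=> _ [|i] //; rewrite addn0.
case/andP => ab H2 [|i] Hi /=; first by rewrite addn0.
have := IH b H2 i Hi. move=> /=. lia.
Qed.

Lemma sorted_nth_ge (t : seq nat) : sorted ltn t -> forall i, i < size t -> i <= nth 0 t i.
Proof.
case: t => [//|a t] /= H i Hi.
have := path_nth_ge H Hi; lia.
Qed.

Lemma uniq_sum_ge (s : seq nat) : uniq s -> \sum_(i < size s) i <= \sum_(y <- s) y.
Proof.
move=> Us.
have Ps : perm_eq (sort leq s) s by rewrite perm_sort.
set t := sort leq s in Ps.
have St : sorted ltn t.
  by rewrite ltn_sorted_uniq_leq sort_uniq Us sort_sorted //; exact: leq_total.
rewrite -(perm_big _ Ps) -(perm_size Ps) (big_nth 0) big_mkord.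
apply: leq_sum => i _; exact: sorted_nth_ge.
Qed.

Lemma inj_sum_ge (I : finType) (f : I -> nat) : injective f ->
  \sum_(k < #|I|) k <= \sum_i f i.
Proof.
move=> If.
have := uniq_sum_ge (etrans (map_inj_uniq If _) (index_enum_uniq I)).
by rewrite size_map cardT enumT big_map.
Qed.

Lemma inj_sum_ge1 (I : finType) (f : I -> nat) : injective f -> (forall i, 0 < f i) ->
  \sum_(k < #|I|) k + #|I| <= \sum_i f i.
Proof.
move=> If Hf.
have If' : injective (fun i => (f i).-1).
  by move=> i j H; apply: If; rewrite -(prednK (Hf i)) -(prednK (Hf j)) H.
have := inj_sum_ge If'.
have -> : \sum_i f i = \sum_i (f i).-1 + #|I|.
  rewrite -sum1_card big_mkcond /= -big_split /=; apply: eq_bigr => i _.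
  by rewrite addn1 prednK.
by rewrite leq_add2r.
Qed.

Lemma sum_succ2 k : (\sum_(i < k) i) * 2 = k * k.-1.
Proof.
elim: k => [|k IH]; first by rewrite big_ord0.
rewrite big_ord_recr /= mulnDl IH; case: k {IH} => //= k; lia.
Qed.

Section Gen.
Variables (T : finType) (e : rel T).

Lemma cseq_inj (x : seqtype e) : cseq x -> injective x.
Proof. by case/andP => /injectiveP. Qed.

Lemma cseq_bij (x : seqtype e) : cseq x -> bijective x.
Proof.
move=> H; apply: inj_card_bij (cseq_inj H) _.
by rewrite card_ord.
Qed.

Lemma pos_x (x : seqtype e) i : injective x -> pos x (x i) = i.+1.
Proof. by move=> Ix; rewrite /pos index_map // index_enum_ord. Qed.

Lemma pos_inj (x : seqtype e) : cseq x -> injective (pos x).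
Proof.
move=> H a b; have [g xg gx] := cseq_bij H.
rewrite -(gx a) -(gx b) !pos_x; try exact: cseq_inj H.
by move=> [] /val_inj ->.
Qed.

Lemma sum_pos (x : seqtype e) : cseq x -> \sum_a pos x a = \sum_(i < ell e) i.+1.
Proof.
move=> H; rewrite (reindex x); last by apply: onW_bij; exact: cseq_bij.
apply: eq_bigr => i _; apply: pos_x; exact: cseq_inj.
Qed.

Lemma cseq_lt (x : seqtype e) (s : edge_type e) u : cseq x -> u \in val s -> pos x (inl u) < pos x (inr s).
Proof.
case/andP => _ /forallP /(_ s) /forallP /(_ u) /implyP; apply.
Qed.

End Gen.

Lemma sum_subK (I : finType) (F G : I -> nat) : (forall i, G i <= F i) ->
  \sum_i (F i - G i) + \sum_i G i = \sum_i F i.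
Proof. by move=> H; rewrite -big_split; apply: eq_bigr => i _ /=; rewrite subnK. Qed.

Section DS.
Variable n : nat.
Local Notation T := (ds_vertex n).
Local Notation G := (double_star n).

Definition h0 : T := (false, None).
Definition h1 : T := (true, None).

Definition es (o : option (bool * 'I_n)) : {set T} :=
  match o with
  | None => [set h0; h1]
  | Some (b, i) => [set (b, None); (b, Some i)]
  end.

Lemma es_edge o : is_edge G (es o).
Proof.
case: o => [[b i]|]; apply/existsP.
  by exists (b, None); apply/existsP; exists (b, Some i); rewrite /double_star /= !eqxx.
by exists h0; apply/existsP; exists h1; rewrite /double_star /= !eqxx.
Qed.

Definition ef o : edge_type G := exist _ (es o) (es_edge o).

Lemma es_inj : injective es.
Proof.
case=> [[b i]|]; case=> [[c j]|] //= /setP H.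
- have := H (b, Some i); rewrite !inE !xpair_eqE !eqxx /= andbF /=.
  by move=> /esym /andP [/eqP -> /eqP [->]].
- by have := H (b, Some i); rewrite !inE !xpair_eqE !eqxx /= !andbF.
- have := H (~~ c, None); rewrite !inE !xpair_eqE /=.
  by case: c H.
Qed.

Lemma ef_inj : injective ef.
Proof. by move=> o1 o2 /(congr1 val) /es_inj. Qed.

Lemma ef_surj (s : edge_type G) : exists o, ef o = s.
Proof.
case: s => S HS0; case/existsP: (HS0) => u /existsP [w /andP [Huw /eqP HS]].
suff [o Ho] : exists o, es o = S by exists o; apply: val_inj.
clear HS0; subst S; case: u w Huw => [b [i|]] [c [j|]]; rewrite /double_star //=.
- by move=> /eqP <-; exists (Some (b, i)); rewrite /= setUC.
- by move=> /eqP <-; exists (Some (b, j)).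
- by case: b; case: c => // _; exists None; rewrite //= setUC.
Qed.

Definition eg (s : edge_type G) : option (bool * 'I_n) :=
  odflt None [pick o | ef o == s].

Lemma ef_bij : bijective ef.
Proof.
exists eg.
  move=> o; rewrite /eg; case: pickP => [o' /eqP /ef_inj -> //|/(_ o)].
  by rewrite eqxx.
move=> s; rewrite /eg; case: pickP => [o' /eqP -> //|H].
by case: (ef_surj s) => o Ho; have := H o; rewrite Ho eqxx.
Qed.

Lemma sum_edges (F : edge_type G -> nat) : \sum_s F s = \sum_o F (ef o).
Proof. by rewrite (reindex ef) //; apply: onW_bij; exact: ef_bij. Qed.

Lemma sum_es (f : T -> nat) o : \sum_(u in es o) f u =
  match o with None => f h0 + f h1 | Some (b, i) => f (b, None) + f (b, Some i) end.
Proof.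
case: o => [[b i]|] /=; rewrite big_setU1 ?big_set1 // inE //; by rewrite xpair_eqE andbF.
Qed.

Lemma card_E : #|{: edge_type G}| = (n + n).+1.
Proof.
rewrite -(bij_eq_card ef_bij) card_option card_prod card_bool card_ord; lia.
Qed.

Lemma card_T : #|{: T}| = (n + n).+2.
Proof. rewrite card_prod card_option card_bool card_ord; lia. Qed.

Lemma ell_G : ell G = 4 * n + 3.
Proof. rewrite /ell card_sum card_T card_E; lia. Qed.

Lemma sum_T (f : T -> nat) : \sum_v f v =
  f h0 + f h1 + \sum_i f (true, Some i) + \sum_i f (false, Some i).
Proof.
have -> : \sum_v f v = \sum_b \sum_o f (b, o).
  by rewrite pair_bigA; apply: eq_bigr => -[].
rewrite big_bool !sum_opt /h0 /h1 /=; lia.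
Qed.

Lemma sum_A (f : T -> nat) : \sum_o \sum_(u in es o) f u =
  n * (f h0 + f h1) + \sum_v f v.
Proof.
rewrite sum_T sum_opt sum_es.
under eq_bigr => p _ do rewrite sum_es.
have -> : \sum_(p : bool * 'I_n) (let (b, i) := p in f (b, None) + f (b, Some i)) = \sum_b \sum_i (f (b, None) + f (b, Some i)).
  by rewrite pair_bigA; apply: eq_bigr => -[].
rewrite big_bool !big_split /= !sum_nat_const !card_ord /h0 /h1; lia.
Qed.

End DS.

Section Main.
Variable n : nat.
Local Notation T := (ds_vertex n).
Local Notation G := (double_star n).

Lemma A_le (x : seqtype G) (s : edge_type G) : cseq x ->
  \sum_(u in sval s) pos x (inl u) <= 2 * pos x (inr s).
Proof.
move=> Hx; have [o <-] := ef_surj s.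
have H u : u \in es o -> pos x (inl u) < pos x (inr (ef o)).
  by move=> Hu; apply: cseq_lt.
rewrite /= sum_es; case: o H => [[b i]|] H.
  have := H (b, None); have := H (b, Some i); rewrite !inE !eqxx ?orbT /=; lia.
have := H (h0 n); have := H (h1 n); rewrite !inE !eqxx ?orbT /=; lia.
Qed.

Lemma identity (x : seqtype G) : cseq x ->
  let V := \sum_v pos x (inl v) in
  let H := pos x (inl (h0 n)) + pos x (inl (h1 n)) in
  cost x + n * H + 3 * V = 2 * \sum_(i < ell G) i.+1.
Proof.
move=> Hx V H.
have E1 : cost x + \sum_(s : edge_type G) \sum_(u in sval s) pos x (inl u) = 2 * \sum_(s : edge_type G) pos x (inr s).
  have := sum_subK (fun s => A_le s Hx).
  by rewrite -big_distrr /= => <-.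
have E2 := sum_pos Hx; rewrite sum_sumT in E2.
have E3 := sum_A (fun u => pos x (inl u)).
rewrite -(sum_edges (fun s => \sum_(u in sval s) pos x (inl u))) in E3.
rewrite -E2; rewrite /= in E3; rewrite E3 in E1.
move: E1; set Sv := \sum_v pos x (inl v); set Se := \sum_(s : edge_type G) pos x (inr s).
rewrite /V /H -/Sv; lia.
Qed.

End Main.

Lemma sum_succ k : (\sum_(i < k) i.+1) * 2 = k * k.+1.
Proof.
elim: k => [|k IH]; first by rewrite big_ord0.
rewrite big_ord_recr /= mulnDl IH; lia.
Qed.

Lemma sum_id k : (\sum_(i < k) i) * 2 + 2 * k = k * k.+1.
Proof.
elim: k => [|k IH]; first by rewrite big_ord0.
rewrite big_ord_recr /= mulnDl. move: IH. set s1 := \sum_(i < k) i. nia.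
Qed.

Section Fin.
Variable n : nat.
Local Notation T := (ds_vertex n).
Local Notation G := (double_star n).

Lemma upper (x : seqtype G) : cseq x -> cost x <= 10 * n ^ 2 + 10 * n + 3.
Proof.
move=> Hx; have := identity Hx => /=.
have Pi := pos_inj Hx.
have Iv : injective (fun v : T => pos x (inl v)) by move=> u v /Pi [].
have := inj_sum_ge1 Iv (fun v => ltn0Sn _).
rewrite card_T.
have := sum_id (n + n).+2.
have := sum_succ (ell G); rewrite ell_G.
have : pos x (inl (h0 n)) != pos x (inl (h1 n)) by apply/eqP => /Pi.
rewrite /pos.
set a := index (inl (h0 n)) _; set b := index (inl (h1 n)) _.
set V := \sum_v _; set S := \sum_(i < _) i.+1; set S2 := \sum_(i < _) i.
move=> /eqP Hab E1 E2 E3.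
have : n * (a.+1 + b.+1) >= 3 * n.
  rewrite mulnC leq_mul2l; apply/orP; right; lia.
nia.
Qed.

End Fin.

Section Wit.
Variable n : nat.
Local Notation T := (ds_vertex n).
Local Notation G := (double_star n).

Definition Lt : seq T := h0 n :: h1 n :: [seq v <- index_enum T | v.2 != None].

Lemma Lt_uniq : uniq Lt.
Proof.
rewrite /= !mem_filter /= filter_uniq ?index_enum_uniq // !andbT.
by rewrite inE mem_filter.

Qed.

Lemma Lt_all v : v \in Lt.
Proof.
case: v => b [i|]; rewrite !inE ?mem_filter /= ?mem_index_enum //.
by rewrite !orbT.
by case: b.
Qed.

Lemma Lt_size : size Lt = #|{: T}|.
Proof.
rewrite cardT enumT; apply: perm_size; apply: uniq_perm.
- exact: Lt_uniq.
- exact: index_enum_uniq.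
- by move=> v; rewrite Lt_all mem_index_enum.
Qed.

Definition L : seq (elt G) := map inl Lt ++ map inr (index_enum (edge_type G)).

Lemma L_uniq : uniq L.
Proof.
rewrite cat_uniq !map_inj_uniq ?index_enum_uniq ?Lt_uniq //=; try by move=> ? ? [].
rewrite andbT; apply/hasPn => a /mapP [t _ ->]; apply/mapP => [[u _]] //.
Qed.

Lemma L_size : size L = ell G.
Proof.
by rewrite /L size_cat !size_map Lt_size /ell card_sum [#|{: edge_type G}|]cardT enumT.
Qed.

Definition xw : seqtype G := [ffun i : 'I_(ell G) => nth (inl (h0 n)) L i].

Lemma xw_seq : [seq xw i | i <- enum 'I_(ell G)] = L.
Proof.
rewrite -[RHS](mkseq_nth (inl (h0 n))) L_size /mkseq -val_enum_ord -map_comp.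
by apply: eq_map => i; rewrite /= ffunE.
Qed.

Lemma pos_xw a : pos xw a = (index a L).+1.
Proof. by rewrite /pos xw_seq. Qed.

Lemma idx_inl v : index (inl v) L = index v Lt.
Proof.
rewrite /L index_cat map_f ?Lt_all //; rewrite index_map //; by move=> ? ? [].
Qed.

Lemma idx_inr s : size Lt <= index (inr s) L.
Proof.
rewrite /L index_cat size_map; case: ifP => [/mapP [u _] //|_]; exact: leq_addr.
Qed.

Lemma xw_cseq : cseq xw.
Proof.
apply/andP; split.
  apply/injectiveP => i j; rewrite !ffunE => /eqP.
  by rewrite nth_uniq ?L_size ?L_uniq // => /eqP /val_inj.
apply/forallP => s; apply/forallP => u; apply/implyP => _.
rewrite !pos_xw idx_inl ltnS; apply: leq_trans (idx_inr s).
by rewrite index_mem Lt_all.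
Qed.

Lemma V_xw : \sum_v pos xw (inl v) = \sum_(k < #|{: T}|) k + #|{: T}|.
Proof.
under eq_bigr => v _ do rewrite pos_xw idx_inl.
rewrite (@sum_full _ Lt) ?Lt_uniq //; last exact: Lt_all.
rewrite (big_nth (h0 n)) big_mkord -Lt_size.
under eq_bigr => i _ do rewrite index_uniq ?Lt_uniq //.
have := sum_succ (size Lt); have := sum_id (size Lt).
set A1 := \sum_(i < _) i.+1; set A2 := \sum_(i < _) i; nia.
Qed.

Lemma lower : 10 * n ^ 2 + 10 * n + 3 <= cost xw.
Proof.
have := identity xw_cseq => /=.
rewrite V_xw !pos_xw !idx_inl /=.
rewrite card_T.
have := sum_id (n + n).+2.
have := sum_succ (ell G); rewrite ell_G.
set S := \sum_(i < _) i.+1; set S2 := \sum_(i < _) i.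
nia.
Qed.

End Wit.

Unset Implicit Arguments.

Theorem theorem6 (n : nat) :
  1 <= n -> nu_star (double_star n) = 10 * n ^ 2 + 10 * n + 3.
Proof.
move=> _; apply/eqP; rewrite eqn_leq; apply/andP; split.
  apply/bigmax_leqP => x Hx; exact: upper.
apply: leq_trans (lower n) _; apply: leq_bigmax_cond; exact: xw_cseq.
Qed.
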